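(* Let $n$, $k$, $t$ be positive integers with $k\geq t+1$ and $n\geq 2k$, and let $V$ be an $n$-dimensional vector space over $\mathbb{F}_q$. Suppose $\mathcal{F}\subseteq{V\brack k}$ is almost $t$-intersecting. If $A$ is a subspace of $V$ with $\dim(A)<\tau_t(\mathcal{F})\leq k$, then $$|\mathcal{F}_A|\leq{k-t+1\brack 1}^{\tau_t(\mathcal{F})-\dim(A)}{n-\tau_t(\mathcal{F})\brack k-\tau_t(\mathcal{F})}+\sum_{i=0}^{\tau_t(\mathcal{F})-\dim(A)-1}{k-t+1\brack 1}^{i}.$$
   Context: $q$ is a prime power; ${W\brack k}$ is the set of $k$-dimensional subspaces of $W$ and ${m\brack r}$ the Gaussian binomial coefficient $\prod_{i=0}^{r-1}\frac{q^{m-i}-1}{q^{r-i}-1}$ (equal to $1$ for $r=0$). A family $\mathcal{F}\subseteq{V\brack k}$ is almost $t$-intersecting if for each $F\in\mathcal{F}$ there is at most one $F'\in\mathcal{F}$ with $\dim(F\cap F')<t$. A subspace $W$ is a $t$-cover of $\mathcal{F}$ if $\dim(W\cap F)\geq t$ for all $F\in\mathcal{F}$; $\tau_t(\mathcal{F})$ is the minimum dimension of a $t$-cover of $\mathcal{F}$. $\mathcal{F}_A=\{F\in\mathcal{F}: A\subseteq F\}$. *)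

(* Defs.v *)
From HB Require Import structures.
From mathcomp Require Import all_boot all_order all_algebra.
Set Implicit Arguments. Unset Strict Implicit. Unset Printing Implicit Defensive.
Import Order.TTheory GRing.Theory Num.Theory.

(* V = 'rV[K]_n for a finite field K with q = #|K|. *)

Import VectorInternalTheory.
Section Fin.
Variables (K : finFieldType) (n : nat).
HB.instance Definition _ := [Countable of {vspace 'rV[K]_n} by <:].
HB.instance Definition _ := [Finite of {vspace 'rV[K]_n} by <:].
End Fin.

Local Open Scope ring_scope.

(* Gaussian binomial coefficient [m brack r]_q, as a rational number:
   prod_{i<r} (q^(m-i) - 1) / (q^(r-i) - 1)   (= 1 for r = 0) *)
Definition gbin (q m r : nat) : rat :=
  \prod_(i < r) (((q ^ (m - i))%:R - 1) / ((q ^ (r - i))%:R - 1)).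

Section Families.
Variables (K : finFieldType) (n : nat).
Local Notation V := 'rV[K]_n.

Definition k_uniform (Fam : {set {vspace V}}) (k : nat) : Prop :=
  forall F, F \in Fam -> \dim F = k.

Definition almost_t_intersecting (Fam : {set {vspace V}}) (t : nat) : Prop :=
  forall F, F \in Fam -> (#|[set F' in Fam | \dim (F :&: F')%VS < t]| <= 1)%N.

Definition t_cover (Fam : {set {vspace V}}) (t : nat) (W : {vspace V}) : bool :=
  [forall F in Fam, t <= \dim (W :&: F)%VS]%N.

(* tau_t(Fam): minimum dimension of a t-cover (n.+1 if there is none, which
   never happens when all members have dimension >= t, since fullv covers) *)
Definition tau (Fam : {set {vspace V}}) (t : nat) : nat :=
  \big[minn/n.+1]_(W : {vspace V} | t_cover Fam t W) \dim W.

Definition fam_A (Fam : {set {vspace V}}) (A : {vspace V}) : {set {vspace V}} :=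
  [set F in Fam | (A <= F)%VS].

End Families.

(* Main.v *)
Require Import Defs.
From HB Require Import structures.
From mathcomp Require Import all_boot all_order all_algebra all_field zify ring.
Import Order.TTheory GRing.Theory Num.Theory.
Set Implicit Arguments. Unset Strict Implicit. Unset Printing Implicit Defensive.

Section Count.
Variables (K : finFieldType) (n : nat).
Local Notation V := 'rV[K]_n.
Local Notation q := #|K|.

Definition supsp (A U : {vspace V}) d : {set {vspace V}} :=
  [set W : {vspace V} | [&& (A <= W)%VS, (W <= U)%VS & \dim W == \dim A + d]].

Lemma sum_ind (T : finType) (P : pred T) : \sum_(x : T) (P x : nat) = #|P|.
Proof. rewrite -sum1_card [RHS]big_mkcond; apply: eq_bigr => x _; rewrite unfold_in; by case: (P x). Qed.

Arguments sum_ind {T}.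
Lemma sum_ind_set (T : finType) (S : {set T}) : \sum_(x : T) ((x \in S) : nat) = #|S|.
Proof. rewrite -sum1_card [RHS]big_mkcond; apply: eq_bigr => x _; by case: (x \in S). Qed.

Lemma card_vs (W : {vspace V}) : #|[set v : V | v \in W]| = q ^ \dim W.
Proof. by rewrite cardsE card_vspace. Qed.

Lemma card_diff (A W : {vspace V}) : (A <= W)%VS ->
  \sum_(v : V) ((v \in W) && (v \notin A) : nat) = q ^ \dim W - q ^ \dim A.
Proof.
move=> AW; rewrite (sum_ind (fun v => (v \in W) && (v \notin A))); rewrite -!card_vs -(cardsID [set v : V | v \in A] [set v : V | v \in W]).
have -> : [set v : V | v \in W] :&: [set v | v \in A] = [set v | v \in A].
  by apply/setP=> v; rewrite !inE andb_idl // => /(subvP AW).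
rewrite addKn; apply: eq_card => v; by rewrite !inE andbC.
Qed.

Lemma dim_add_line (A : {vspace V}) v : v \notin A -> \dim (A + <[v]>) = (\dim A).+1.
Proof.
move=> vA.
have h1 := dimv_sum_cap A <[v]>.
have h2 : \dim <[v]> <= 1 by rewrite dim_vline; case: (_ != _).
have h3 : \dim A < \dim (A + <[v]>).
  rewrite (ltn_leqif (dimv_leqif_sup (addvSl A <[v]>))) subv_add subvv /=.
  by rewrite -memvE.
lia.
Qed.

Lemma count_sup d : forall A U : {vspace V},
  #|supsp A U d| * \prod_(i < d) (q ^ (\dim A + d) - q ^ (\dim A + i))
    <= \prod_(i < d) (q ^ (\dim U) - q ^ (\dim A + i)).
Proof.
elim: d => [|d IH] A U.
  rewrite !big_ord0 !muln1; apply: (@leq_trans #|[set A]|); last by rewrite cards1.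
  apply: subset_leq_card; apply/subsetP => W; rewrite !inE addn0 => /and3P [AW _ /eqP dW].
  by rewrite eq_sym eqEdim AW dW leqnn.
case AU: (A <= U)%VS; last first.
  suff -> : supsp A U d.+1 = set0 by rewrite cards0.
  apply/setP => W; rewrite !inE; apply/negbTE; apply/negP => /and3P[AW WU _].
  by move: AU; rewrite (subv_trans AW WU).
set X := supsp A U d.+1.
set a := \dim A; set m := \dim U.
set c := q^(a + d.+1) - q^a.
set P' := \prod_(i<d) (q^(a.+1 + d) - q^(a.+1 + i)).
set R' := \prod_(i<d) (q^m - q^(a.+1 + i)).
have E1 : \prod_(i < d.+1) (q ^ (a + d.+1) - q ^ (a + i)) = c * P'.
  rewrite big_ord_recl addn0; congr (_ * _); apply: eq_bigr => i _.
  by rewrite /= -!addSnnS.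
have E2 : \prod_(i < d.+1) (q ^ m - q ^ (a + i)) = (q^m - q^a) * R'.
  rewrite big_ord_recl addn0; congr (_ * _); apply: eq_bigr => i _.
  by rewrite /= -!addSnnS.
rewrite E1 E2 mulnA.
have S1 : \sum_(W : {vspace V}) \sum_(v : V) ((W \in X) && ((v \in W) && (v \notin A)) : nat) = #|X| * c.
  transitivity (\sum_(W in X) c); last by rewrite sum_nat_const.
  rewrite [RHS]big_mkcond; apply: eq_bigr => W _; case WX: (W \in X) => /=; last by rewrite big1.
  move: (WX); rewrite inE => /and3P [AW _ /eqP dW].
  by rewrite card_diff // dW.
have S3 v : (\sum_(W : {vspace V}) ((W \in X) && ((v \in W) && (v \notin A)) : nat)) * P'
     <= ((v \in U) && (v \notin A)) * R'.
  case vA: (v \in A) => /=.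
    by rewrite big1 // => W _; rewrite !andbF.
  case vU: (v \in U) => /=.
    have -> : \sum_(W : {vspace V}) ((W \in X) && ((v \in W) && true) : nat)
        = #|supsp (A + <[v]>) U d|.
      rewrite -sum_ind_set; apply: eq_bigr => W _; rewrite !inE !andbT dim_add_line ?vA //.
      rewrite subv_add -memvE -addSnnS.
      by case: (A <= W)%VS; case: (v \in W); case: (W <= U)%VS; rewrite /= ?andbF ?andbT.
    by have := IH (A + <[v]>)%VS U; rewrite dim_add_line ?vA // mul1n.
  rewrite big1 // => W _; case WX: (W \in X) => //=; case vW: (v \in W) => //=.
  move: WX; rewrite inE => /and3P [_ WU _].
  by move: vU; rewrite (subvP WU _ vW).
rewrite -S1 exchange_big /= big_distrl /=.
apply: (@leq_trans (\sum_(v : V) (((v \in U) && (v \notin A) : nat) * R'))).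
  by apply: leq_sum => v _; exact: S3.
by rewrite -big_distrl /= card_diff.
Qed.

Lemma tau_le (Fam : {set {vspace V}}) t W : t_cover Fam t W -> (tau Fam t <= \dim W)%N.
Proof.
move=> h; rewrite /tau.
have : W \in index_enum {vspace V} by rewrite mem_index_enum.
elim: (index_enum _) => // i r IHr; rewrite inE big_cons => /orP [/eqP <- | jr].
  by rewrite h geq_minl.
case: (t_cover Fam t i); last exact: IHr.
exact: (leq_trans (geq_minr _ _) (IHr jr)).
Qed.

Local Open Scope ring_scope.

Lemma q_gt1 : (1 < q)%N.
Proof. exact: card_finNzRing_gt1. Qed.

Lemma gbin_ge0 m r : 0 <= gbin q m r.
Proof.
apply: prodr_ge0 => i _; apply: divr_ge0; rewrite subr_ge0 ler1n expn_gt0;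
  by rewrite (ltn_trans _ q_gt1).
Qed.

Lemma fact_ratio x y e : (e < y)%N -> (y <= x)%N ->
  ((q ^ (x - e))%:R - 1) / ((q ^ (y - e))%:R - 1)
    = (q ^ x - q ^ e)%:R / (q ^ y - q ^ e)%:R :> rat.
Proof.
move=> ey yx.
have E z : (e <= z)%N -> (q ^ z - q ^ e)%:R = (q ^ e)%:R * ((q ^ (z - e))%:R - 1) :> rat.
  move=> ez; rewrite -{1}(subnKC ez) expnD -[X in (_ - X)%N](muln1 (q ^ e)%N) -mulnBr natrM natrB //.
  by rewrite expn_gt0 (ltn_trans _ q_gt1).
rewrite !E ?(ltnW ey) ?(leq_trans (ltnW ey) yx) // -mulf_div divff ?mul1r //.
by rewrite pnatr_eq0 expn_eq0 negb_and -lt0n (ltn_trans _ q_gt1).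
Qed.

Lemma count_sup_rat (A U : {vspace V}) d : (\dim A + d <= \dim U)%N ->
  (#|supsp A U d|%:R : rat) <= gbin q (\dim U - \dim A) d.
Proof.
move=> h; have H := count_sup d A U.
have Ppos : (0 < \prod_(i<d) (q^(\dim A + d) - q^(\dim A + i)))%N.
  by rewrite prodn_gt0 // => i; rewrite subn_gt0 ltn_exp2l ?q_gt1 // ltn_add2l.
have -> : gbin q (\dim U - \dim A) d =
   (\prod_(i<d) (q^(\dim U) - q^(\dim A + i)))%:R / (\prod_(i<d) (q^(\dim A + d) - q^(\dim A + i)))%:R.
  rewrite /gbin !natr_prod -prodf_div; apply: eq_bigr => i _.
  rewrite -fact_ratio ?ltn_add2l ?h //.
  by rewrite subnDA subnDl.
by rewrite ler_pdivlMr ?ltr0n // -natrM ler_nat.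
Qed.

Lemma cover_bound (T I : finType) (X B : {set T}) (L : {set I}) (Y : I -> {set T}) :
  (forall x, x \in X -> x \notin B -> exists2 i, i \in L & x \in Y i) ->
  (#|X| <= #|B| + \sum_(i in L) #|Y i|)%N.
Proof.
move=> h; rewrite -!sum_ind_set.
rewrite (eq_bigr (fun i => \sum_x ((x \in Y i) : nat))); last by move=> i _; rewrite sum_ind_set.
rewrite exchange_big -big_split /=; apply: leq_sum => x _.
case xX: (x \in X) => //; case xB: (x \in B) => //.
have [i iL xi] := h x xX (negbT xB).
by rewrite add0n (bigD1 i) //= xi.
Qed.

End Count.

Unset Implicit Arguments.
Local Open Scope ring_scope.

Theorem corollary3p4 (K : finFieldType) (n k t : nat)
    (Fam : {set {vspace 'rV[K]_n}}) (A : {vspace 'rV[K]_n}) :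
  (0 < t)%N -> (t.+1 <= k)%N -> (2 * k <= n)%N ->
  k_uniform Fam k ->
  almost_t_intersecting Fam t ->
  (\dim A < tau Fam t)%N -> (tau Fam t <= k)%N ->
  (#|fam_A Fam A|)%:R <=
    gbin #|K| (k - t + 1) 1 ^+ (tau Fam t - \dim A)
      * gbin #|K| (n - tau Fam t) (k - tau Fam t)
    + \sum_(i < tau Fam t - \dim A) gbin #|K| (k - t + 1) 1 ^+ i :> rat.
Proof.
move=> t0 tk kn unif almost Alt tauk.
set ta := tau Fam t.
set c := gbin #|K| (k - t + 1) 1.
set N := gbin #|K| (n - ta) (k - ta).
have c0 : 0 <= c by apply: gbin_ge0.
have N0 : 0 <= N by apply: gbin_ge0.
have dimf : \dim (fullv : {vspace 'rV[K]_n}) = n.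
  by rewrite dimvf dim_matrix mul1r.
suff main : forall d A, (\dim A + d = ta)%N ->
    (#|fam_A Fam A|)%:R <= c ^+ d * N + \sum_(i < d) c ^+ i.
  by apply: main; rewrite subnKC // ltnW.
clear Alt; elim => [|d IH] {}A hA.
  rewrite expr0 mul1r big_ord0 addr0; rewrite addn0 in hA.
  apply: (@le_trans _ rat (#|supsp A fullv (k - ta)|)%:R).
    rewrite ler_nat; apply: subset_leq_card; apply/subsetP => F; rewrite !inE => /andP [FF AF].
    by rewrite AF subvf /= unif // hA subnKC.
  have := @count_sup_rat _ _ A fullv (k - ta); rewrite dimf hA; apply.
  rewrite subnKC //; lia.
have Alt' : (\dim A < ta)%N by lia.
have : ~~ t_cover Fam t A.
  by apply: contraTN Alt' => /tau_le; rewrite leqNgt.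
case/forallPn => F0; rewrite negb_imply -ltnNge => /andP [F0in ltA].
set C := (F0 :\: A)%VS.
have dF0 : \dim F0 = k by apply: unif.
have dC : \dim C = (k - \dim (F0 :&: A))%N by rewrite -dF0 -(dimv_cap_compl F0 A) addKn.
have CA : (C :&: A = 0)%VS by apply: capv_diff.
have CF0 : (C <= F0)%VS by apply: diffvSl.
have dFA : \dim (F0 :&: A) = \dim (A :&: F0) by rewrite capvC.
have jC : (k - t + 1 <= \dim C)%N by rewrite dC dFA; lia.
set X := take (k - t + 1) (vbasis C).
have freeX : free X.
  apply: (@catl_free _ _ (drop (k - t + 1) (vbasis C))); rewrite cat_take_drop.
  exact: basis_free (vbasisP C).
set S := (<<X>>)%VS.
have dS : \dim S = (k - t + 1)%N by rewrite (eqP freeX) size_takel // size_tuple.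
have SC : (S <= C)%VS by apply/span_subvP => v /mem_take /vbasis_mem.
set L := supsp 0%VS S 1.
have cardL : (#|L|)%:R <= c.
  have := @count_sup_rat _ _ 0%VS S 1; rewrite dimv0 subn0 dS add0n; apply; lia.
set bad := [set F' in Fam | (\dim (F0 :&: F') < t)%N].
have badc : (#|bad| <= 1)%N := almost F0 F0in.
have cov : (#|fam_A Fam A| <= #|bad| + \sum_(P in L) #|fam_A Fam (A + P)|)%N.
  apply: cover_bound => G; rewrite !inE => /andP [GF AG]; rewrite GF /= -leqNgt => tG.
  have h1 := dimv_sum_cap (F0 :&: G) S.
  have h2 : (\dim ((F0 :&: G) + S) <= k)%N.
    rewrite -dF0; apply: dimvS; by rewrite subv_add capvSl (subv_trans SC CF0).
  set Z := ((F0 :&: G) :&: S)%VS.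
  have Znz : Z != 0%VS by rewrite -dimv_eq0 /Z; lia.
  set v := vpick Z.
  have vZ : v \in Z := memv_pick Z.
  have v0 : v != 0 by rewrite /v vpick0.
  move: vZ; rewrite !memv_cap => /andP [/andP [vF0 vG] vS].
  exists <[v]>%VS.
    by rewrite inE sub0v -memvE vS dimv0 add0n dim_vline v0.
  by rewrite inE GF subv_add AG -memvE vG.
set B := c ^+ d * N + \sum_(i < d) c ^+ i.
have IH' : forall P, P \in L -> (#|fam_A Fam (A + P)|)%:R <= B.
  move=> P; rewrite inE => /and3P [_ PS /eqP dP]; rewrite dimv0 add0n in dP.
  apply: IH; rewrite dimv_disjoint_sum ?dP; first lia.
  apply/eqP; rewrite -subv0 -CA subv_cap capvSl andbT.
  exact: (subv_trans (capvSr A P) (subv_trans PS SC)).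
have B0 : 0 <= B.
  by rewrite addr_ge0 ?mulr_ge0 ?exprn_ge0 ?sumr_ge0 // => i _; rewrite exprn_ge0.
apply: (@le_trans _ rat (#|bad| + \sum_(P in L) #|fam_A Fam (A + P)|)%N%:R); first by rewrite ler_nat.
rewrite natrD natr_sum.
apply: (@le_trans _ rat (1 + \sum_(P in L) B)).
  apply: lerD; first by rewrite -(ler_nat rat) in badc.
  by apply: ler_sum => P PL; apply: IH'.
rewrite sumr_const -mulr_natl.
apply: (@le_trans _ rat (1 + c * B)).
  by rewrite lerD2l ler_wpM2r.
have E : \sum_(i < d.+1) c ^+ i = 1 + c * \sum_(i < d) c ^+ i.
  rewrite big_ord_recl expr0 mulr_sumr; congr (_ + _); apply: eq_bigr => i _.
  by rewrite lift0 exprS.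
rewrite E exprS /B; rewrite le_eqVlt; apply/orP; left; apply/eqP; ring.
Qed.
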